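(* Let $p_1\equiv p_2\equiv1\pmod4$ be primes, $d=2p_1p_2$, $k=\mathbb{Q}(\sqrt d,i)$, and suppose the fundamental unit $\varepsilon_d$ of $\mathbb{Q}(\sqrt d)$ has $N(\varepsilon_d)=-1$. (i) If $\sqrt{\varepsilon_d}$ has the form $\tfrac12[y_1(1+i)\sqrt{(1\pm i)\pi_1\pi_3}+y_2(1-i)\sqrt{(1\mp i)\pi_2\pi_4}]$ with $y_1,y_2\in\mathbb{Z}[i]$, then the ideals $\mathcal{H}_0\mathcal{H}_1\mathcal{H}_3$ and $\mathcal{H}_0\mathcal{H}_2\mathcal{H}_4$ are principal in $k$. (ii) If $\sqrt{\varepsilon_d}$ has the form $\tfrac12[y_1(1+i)\sqrt{(1\pm i)\pi_1\pi_4}+y_2(1-i)\sqrt{(1\mp i)\pi_2\pi_3}]$ with $y_1,y_2\in\mathbb{Z}[i]$, then $\mathcal{H}_0\mathcal{H}_1\mathcal{H}_4$ and $\mathcal{H}_0\mathcal{H}_2\mathcal{H}_3$ are principal in $k$.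
   Context: $i=\sqrt{-1}$. Write $p_1=e^2+4f^2$, $p_2=g^2+4h^2$ with integers $e,f,g,h$, and set $\pi_1=e+2if$, $\pi_2=e-2if$, $\pi_3=g+2ih$, $\pi_4=g-2ih$. For $j=1,\dots,4$, $\mathcal{H}_j$ is the prime ideal of $k$ above $\pi_j$ (so $\mathcal{H}_j^2=\pi_j\mathcal{O}_k$), and $\mathcal{H}_0$ is the prime ideal of $k$ above $1+i$ (so $\mathcal{H}_0^2=(1+i)\mathcal{O}_k$). $N$ is the norm from $\mathbb{Q}(\sqrt d)$ to $\mathbb{Q}$. (One of the two forms always occurs.) *)

(* Defs.v *)
From HB Require Import structures.
From mathcomp Require Import all_boot all_order all_algebra all_field.
Set Implicit Arguments. Unset Strict Implicit. Unset Printing Implicit Defensive.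
Import Order.TTheory GRing.Theory Num.Theory.
Local Open Scope ring_scope.

Definition gauss_int (y : algC) : Prop := ('Re y \in Num.int) /\ ('Im y \in Num.int).

Definition in_Qsqrt (d : nat) (x : algC) : Prop :=
  exists a b : rat, x = ratr a + ratr b * sqrtC d%:R.

Definition Qsqrt_unit (d : nat) (u : algC) : Prop :=
  [/\ in_Qsqrt d u, u \in Aint & u^-1 \in Aint].

(* The fundamental unit eps_d: the smallest unit of O_{Q(sqrt d)} larger than 1
   (Q(sqrt d) embedded in algC with sqrtC d > 0 real). *)
Definition fund_unit (d : nat) (eps : algC) : Prop :=
  [/\ Qsqrt_unit d eps, 1 < eps &
      forall u, Qsqrt_unit d u -> 1 < u -> eps <= u].

Definition Qsqrt_norm_is (d : nat) (x : algC) (n : rat) : Prop :=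
  exists a b : rat, x = ratr a + ratr b * sqrtC d%:R /\ n = a ^+ 2 - d%:R * b ^+ 2.

Definition in_k (d : nat) (x : algC) : Prop :=
  exists a b c e : rat,
    x = ratr a + ratr b * sqrtC d%:R + 'i * (ratr c + ratr e * sqrtC d%:R).
Definition in_Ok (d : nat) (x : algC) : Prop := in_k d x /\ x \in Aint.

Definition is_ideal (d : nat) (I : algC -> Prop) : Prop :=
  [/\ forall x, I x -> in_Ok d x, I 0,
      forall x y, I x -> I y -> I (x + y) &
      forall r x, in_Ok d r -> I x -> I (r * x)].

Definition ideal_mul (I J : algC -> Prop) : algC -> Prop :=
  fun x => exists s : seq (algC * algC),
    (forall p, p \in s -> I p.1 /\ J p.2) /\ x = \sum_(p <- s) p.1 * p.2.

Definition pideal (d : nat) (alpha : algC) : algC -> Prop :=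
  fun x => exists r, in_Ok d r /\ x = alpha * r.

Definition ideal_eq (I J : algC -> Prop) : Prop := forall x, I x <-> J x.

Definition is_principal (d : nat) (I : algC -> Prop) : Prop :=
  exists alpha, in_Ok d alpha /\ ideal_eq I (pideal d alpha).

(* Prime ideal of O_k (proper, nonzero is implied below by H^2 = pi O_k). *)
Definition is_prime_ideal (d : nat) (I : algC -> Prop) : Prop :=
  [/\ is_ideal d I, ~ I 1 &
      forall x y, in_Ok d x -> in_Ok d y -> I (x * y) -> I x \/ I y].

Definition ideal_above (d : nat) (pi : algC) (H : algC -> Prop) : Prop :=
  is_prime_ideal d H /\ ideal_eq (ideal_mul H H) (pideal d pi).

Definition has_form (eps a b : algC) : Prop :=
  exists y1 y2 r1 r2 : algC,
    [/\ gauss_int y1, gauss_int y2,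
        (r1 ^+ 2 = (1 + 'i) * a /\ r2 ^+ 2 = (1 - 'i) * b) \/
        (r1 ^+ 2 = (1 - 'i) * a /\ r2 ^+ 2 = (1 + 'i) * b) &
        sqrtC eps = (y1 * (1 + 'i) * r1 + y2 * (1 - 'i) * r2) / 2%:R].

(* Main.v *)
Require Import Defs.
From HB Require Import structures.
From mathcomp Require Import all_boot all_order all_algebra all_field.
From mathcomp Require Import ring.
Import Order.TTheory GRing.Theory Num.Theory.
Local Open Scope ring_scope.

Lemma Aint_sqr (z : algC) : z ^+ 2 \in Aint -> z \in Aint.
Proof.
move=> Hr.
pose q := minCpoly (z ^+ 2).
apply: (@root_monic_Aint (q \Po 'X^2)).
- by rewrite /root horner_comp hornerXn; exact: root_minCpoly.
- apply/monicP; rewrite lead_coef_comp ?size_polyXn //.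
  by rewrite lead_coefXn expr1n mulr1; apply/monicP/minCpoly_monic.
- by apply: polyOver_comp => //; rewrite polyOverXn.
Qed.

Definition in_Q (d : nat) (x : algC) : Prop :=
  exists a b : rat, x = ratr a + ratr b * sqrtC d%:R.

Lemma inQ_rat d q : in_Q d (ratr q).
Proof. by exists q, 0; rewrite rmorph0 mul0r addr0. Qed.

Lemma inQ_sqrt d : in_Q d (sqrtC d%:R).
Proof. by exists 0, 1; rewrite rmorph0 rmorph1 mul1r add0r. Qed.

Lemma inQ_add d x y : in_Q d x -> in_Q d y -> in_Q d (x + y).
Proof.
move=> [a [b ->]] [a' [b' ->]]; exists (a + a'), (b + b').
by rewrite !rmorphD /=; ring.
Qed.

Lemma inQ_mul d x y : in_Q d x -> in_Q d y -> in_Q d (x * y).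
Proof.
move=> [a [b ->]] [a' [b' ->]]; exists (a * a' + d%:R * b * b'), (a * b' + b * a').
rewrite !rmorphD !rmorphM /= ratr_nat.
set s := sqrtC _.
have hs : s ^+ 2 = d%:R by rewrite sqrtCK.
rewrite -hs; ring.
Qed.

Lemma inQ_opp d x : in_Q d x -> in_Q d (- x).
Proof.
move=> h; have -> : - x = ratr (-1) * x by rewrite rmorphN rmorph1 mulN1r.
by apply: inQ_mul => //; apply: inQ_rat.
Qed.

Lemma in_kE d x : in_k d x <-> exists u v, [/\ in_Q d u, in_Q d v & x = u + 'i * v].
Proof.
split.
  by move=> [a [b [c [e ->]]]]; exists (ratr a + ratr b * sqrtC d%:R), (ratr c + ratr e * sqrtC d%:R); split => //; [exists a, b | exists c, e].
move=> [u [v [[a [b ->]] [c [e ->]] ->]]]; by exists a, b, c, e.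
Qed.

Lemma ink_add d x y : in_k d x -> in_k d y -> in_k d (x + y).
Proof.
move=> /in_kE [u [v [hu hv ->]]] /in_kE [u' [v' [hu' hv' ->]]].
apply/in_kE; exists (u + u'), (v + v'); split; try by apply: inQ_add.
ring.
Qed.

Lemma ink_mul d x y : in_k d x -> in_k d y -> in_k d (x * y).
Proof.
move=> /in_kE [u [v [hu hv ->]]] /in_kE [u' [v' [hu' hv' ->]]].
apply/in_kE; exists (u * u' - v * v'), (u * v' + v * u'); split.
- by apply: inQ_add; [apply: inQ_mul | apply/inQ_opp/inQ_mul].
- by apply: inQ_add; apply: inQ_mul.
have hi : 'i ^+ 2 = -1 :> algC by rewrite sqrCi.
apply/eqP; rewrite -subr_eq0; apply/eqP.
transitivity (('i ^+ 2 + 1) * (v * v')); first by ring.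
by rewrite hi addNr mul0r.
Qed.

Lemma inQ0 d : in_Q d 0.
Proof. by exists 0, 0; rewrite rmorph0 mul0r addr0. Qed.

Lemma inQ1 d : in_Q d 1.
Proof. by exists 1, 0; rewrite rmorph0 rmorph1 mul0r addr0. Qed.

Lemma ink_Q d x : in_Q d x -> in_k d x.
Proof. by move=> h; apply/in_kE; exists x, 0; split => //; [apply: inQ0 | rewrite mulr0 addr0]. Qed.

Lemma ink_rat d q : in_k d (ratr q).
Proof. exact/ink_Q/inQ_rat. Qed.

Lemma ink_int d (z : int) : in_k d (z%:~R).
Proof. by rewrite -ratr_int; apply: ink_rat. Qed.

Lemma ink_nat d (n : nat) : in_k d (n%:R).
Proof. by rewrite -ratr_nat; apply: ink_rat. Qed.

Lemma ink_sqrt d : in_k d (sqrtC d%:R).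
Proof. exact/ink_Q/inQ_sqrt. Qed.

Lemma ink_i d : in_k d 'i.
Proof.
apply/in_kE; exists 0, 1; split; [exact: inQ0 | exact: inQ1 | by rewrite add0r mulr1].
Qed.

Lemma ink_opp d x : in_k d x -> in_k d (- x).
Proof.
move=> h; have -> : - x = (-1)%:~R * x by rewrite mulN1r.
by apply: ink_mul => //; apply: ink_int.
Qed.

Lemma ink_sub d x y : in_k d x -> in_k d y -> in_k d (x - y).
Proof. by move=> hx hy; apply: ink_add => //; apply: ink_opp. Qed.

Lemma Aint_i : ('i : algC) \in Aint.
Proof. by apply: Aint_sqr; rewrite sqrCi rpredN rpred1. Qed.

Lemma Ok_add d x y : in_Ok d x -> in_Ok d y -> in_Ok d (x + y).
Proof. by move=> [? ?] [? ?]; split; [apply: ink_add | apply: rpredD]. Qed.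
Lemma Ok_mul d x y : in_Ok d x -> in_Ok d y -> in_Ok d (x * y).
Proof. by move=> [? ?] [? ?]; split; [apply: ink_mul | apply: rpredM]. Qed.
Lemma Ok_opp d x : in_Ok d x -> in_Ok d (- x).
Proof. by move=> [? h]; split; [apply: ink_opp | rewrite rpredN]. Qed.
Lemma Ok_int d (z : int) : in_Ok d z%:~R.
Proof. by split; [apply: ink_int | apply: Aint_int]. Qed.
Lemma Ok0 d : in_Ok d 0. Proof. exact: (Ok_int d 0). Qed.
Lemma Ok1 d : in_Ok d 1. Proof. exact: (Ok_int d 1). Qed.
Lemma Ok_i d : in_Ok d 'i. Proof. by split; [apply: ink_i | apply: Aint_i]. Qed.

Lemma mem_mul1 (I J : algC -> Prop) a b : I a -> J b -> ideal_mul I J (a * b).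
Proof.
move=> ha hb; exists [:: (a, b)]; split; last by rewrite big_seq1.
by move=> p; rewrite inE => /eqP ->.
Qed.

Lemma L1 (T : algC -> Prop) (F : algC -> algC) (I J : algC -> Prop) x :
  T 0 -> (forall a b, T a -> T b -> T (a + b)) -> F 0 = 0 ->
  (forall a b, F (a + b) = F a + F b) ->
  (forall a b, I a -> J b -> T (F (a * b))) -> ideal_mul I J x -> T (F x).
Proof.
move=> T0 TD F0 FD H [s [hs ->]].
elim: s hs => [|p s IH] hs; first by rewrite big_nil F0.
rewrite big_cons FD; apply: TD; last by apply: IH => q hq; apply: hs; rewrite inE hq orbT.
by have [h1 h2] := hs p (mem_head _ _); apply: H.
Qed.

Lemma ideal_mul_ideal d (I J : algC -> Prop) :
  is_ideal d I -> is_ideal d J -> is_ideal d (ideal_mul I J).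
Proof.
move=> [I1 I2 I3 I4] [J1 J2 J3 J4]; split.
- move=> x hx.
  apply: (@L1 (in_Ok d) id I J) => //; [exact: Ok0 | exact: Ok_add |].
  by move=> a b /I1 ha /J1 hb; apply: Ok_mul.
- by exists [::]; rewrite big_nil.
- move=> x y [s [hs ->]] [t [ht ->]]; exists (s ++ t); split; last by rewrite big_cat.
  by move=> p; rewrite mem_cat => /orP [/hs | /ht].
- move=> r x hr [s [hs ->]]; exists [seq (r * p.1, p.2) | p <- s]; split.
    move=> q /mapP [p /hs [h1 h2] ->] /=; split => //; exact: I4.
  by rewrite big_map mulr_sumr; apply: eq_bigr => p _ /=; rewrite mulrA.
Qed.

Arguments ideal_mul_ideal {d I J}.
Arguments mem_mul1 {I J a b}.

Lemma key d (J : algC -> Prop) (al be : algC) :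
  is_ideal d J -> in_Ok d al -> in_k d be -> al * be = 1 ->
  (forall x y, J x -> J y -> exists r, in_Ok d r /\ x * y = al ^+ 2 * r) ->
  ideal_mul J J (al ^+ 2) ->
  is_principal d J.
Proof.
move=> [J1 J2 J3 J4] hal hbe hab A B.
have sub : forall x, J x -> in_Ok d (x * be) /\ x = al * (x * be).
  move=> x hx; have [r [hr e]] := A x x hx hx.
  have ee : (x * be) ^+ 2 = r.
    transitivity ((x * x) * be ^+ 2); first by ring.
    rewrite e; transitivity ((al * be) ^+ 2 * r); first by ring.
    by rewrite hab expr1n mul1r.
  split.
    split; first by apply: ink_mul => //; case: (J1 x hx).
    by apply: Aint_sqr; rewrite ee; case: hr.
  by rewrite mulrCA hab mulr1.
exists al; split => // x; split.
  by move=> hx; have [h1 h2] := sub x hx; exists (x * be).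
move=> [r [hr ->]].
suff hal' : J al by rewrite mulrC; apply: J4.
have -> : al = al ^+ 2 * be by rewrite expr2 -mulrA hab mulr1.
apply: (@L1 J (fun z => z * be) J J) => //.
- by rewrite mul0r.
- by move=> a b; rewrite mulrDl.
move=> a b ha hb; have [h1 _] := sub b hb.
by rewrite -mulrA mulrC; apply: J4.
Qed.

Arguments key {d J al be}.
Lemma above_mul d pi H a b : ideal_above d pi H -> H a -> H b ->
  exists r, in_Ok d r /\ a * b = pi * r.
Proof. by move=> [_ E] ha hb; apply/E/mem_mul1. Qed.

Arguments above_mul {d pi H a b}.
Lemma above_pi d pi H : ideal_above d pi H -> ideal_mul H H pi.
Proof. by move=> [_ E]; apply/E; exists 1; split; [apply: Ok1 | rewrite mulr1]. Qed.

Arguments above_pi {d pi H}.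
Lemma triple d (eps eps' c pa pb : algC) Ha Hb Hc (al be : algC) :
  ideal_above d (1 + 'i) Ha -> ideal_above d pa Hb -> ideal_above d pb Hc ->
  in_Ok d eps -> in_Ok d eps' -> eps * eps' = 1 ->
  (c = 1 + 'i \/ c = 1 - 'i) ->
  al ^+ 2 = eps * c * (pa * pb) -> in_Ok d al -> in_k d be -> al * be = 1 ->
  is_principal d (ideal_mul (ideal_mul Ha Hb) Hc).
Proof.
move=> hA hB hC he he' hee' hc hal hOal hbe hab.
have [IA _ _] := hA.1; have [IB _ _] := hB.1; have [IC _ _] := hC.1.
have IJ := ideal_mul_ideal (ideal_mul_ideal IA IB) IC.
have IJJ := ideal_mul_ideal IJ IJ.
have [J1 J2 J3 J4] := IJ; have [K1 K2 K3 K4] := IJJ.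
have [w [v [hw hv [ew ev]]]] : exists w v, [/\ in_Ok d w, in_Ok d v &
     w * (1 + 'i) = eps * c /\ c * v = 1 + 'i].
  case: hc => ->.
    by exists eps, 1; split => //; [apply: Ok1 | split; [ | rewrite mulr1]].
  exists (eps * - 'i), 'i; split; [apply: Ok_mul => //; apply/Ok_opp/Ok_i | apply: Ok_i |].
  have hi : 'i ^+ 2 = -1 :> algC by rewrite sqrCi.
  split; apply/eqP; rewrite -subr_eq0; apply/eqP.
    transitivity (- eps * ('i ^+ 2 + 1)); first by ring.
    by rewrite hi addNr mulr0.
  transitivity (- ('i ^+ 2 + 1) : algC); first by ring.
  by rewrite hi addNr oppr0.
apply: (key IJ hOal hbe hab).
- pose T := fun z => exists r, in_Ok d r /\ z = al ^+ 2 * r.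
  have T0 : T 0 by exists 0; split; [apply: Ok0 | rewrite mulr0].
  have TD : forall a b, T a -> T b -> T (a + b).
    move=> a b [r [hr ->]] [r' [hr' ->]]; exists (r + r'); split; [exact: Ok_add | ring].
  move=> x y hx hy.
  apply: (@L1 T (fun z => z * y) (ideal_mul Ha Hb) Hc x) => //; [ring | move=> *; ring | ].
  move=> u h3 hu h3in.
  apply: (@L1 T (fun z => z * h3 * y) Ha Hb u) => //; [ring | move=> *; ring | ].
  move=> h0 h1 h0in h1in.
  apply: (@L1 T (fun z => h0 * h1 * h3 * z) (ideal_mul Ha Hb) Hc y) => //; [ring | move=> *; ring | ].
  move=> u' h3' hu' h3in'.
  apply: (@L1 T (fun z => h0 * h1 * h3 * (z * h3')) Ha Hb u') => //; [ring | move=> *; ring | ].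
  move=> h0' h1' h0in' h1in'.
  have [r0 [hr0 e0]] := above_mul hA h0in h0in'.
  have [r1 [hr1 e1]] := above_mul hB h1in h1in'.
  have [r3 [hr3 e3]] := above_mul hC h3in h3in'.
  exists (eps' * v * (r0 * r1 * r3)); split.
    by apply: Ok_mul; [apply: Ok_mul | apply: Ok_mul; [apply: Ok_mul|]].
  transitivity ((h0 * h0') * (h1 * h1') * (h3 * h3')); first by ring.
  rewrite e0 e1 e3 hal.
  transitivity ((eps * eps') * (c * v) * pa * pb * (r0 * r1 * r3)); last by ring.
  by rewrite hee' ev; ring.
- have -> : al ^+ 2 = w * (1 + 'i) * pa * pb by rewrite hal ew mulrA.
  apply: (@L1 _ (fun z => w * z * pa * pb) Ha Ha) => //; [ring | move=> *; ring | | exact: above_pi hA].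
  move=> a0 b0 ha0 hb0.
  apply: (@L1 _ (fun z => w * (a0 * b0) * z * pb) Hb Hb) => //; [ring | move=> *; ring | | exact: above_pi hB].
  move=> a1 b1 ha1 hb1.
  apply: (@L1 _ (fun z => w * (a0 * b0) * (a1 * b1) * z) Hc Hc) => //; [ring | move=> *; ring | | exact: above_pi hC].
  move=> a3 b3 ha3 hb3.
  have -> : w * (a0 * b0) * (a1 * b1) * (a3 * b3) = (w * (a0 * a1 * a3)) * (b0 * b1 * b3) by ring.
  apply: mem_mul1; last by apply: mem_mul1 => //; apply: mem_mul1.
  by apply: J4 => //; apply: mem_mul1 => //; apply: mem_mul1.
Qed.

Lemma ink_invn d (n : nat) : in_k d (n%:R^-1).
Proof. by rewrite -ratr_nat -fmorphV; apply: ink_rat. Qed.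

Lemma alpha1 d (eps eps' y1 y2 u1 u2 r1 r2 c1 c2 A B : algC) :
  (0 < d)%N -> in_k d y1 -> in_k d y2 -> in_k d u1 -> in_k d u2 ->
  in_Ok d c1 -> in_k d c2 -> c1 * c2 = 2%:R -> in_Ok d A -> in_k d B ->
  2%:R * (A * B) = d%:R -> r1 ^+ 2 = c1 * A -> r2 ^+ 2 = c2 * B ->
  sqrtC eps = (y1 * u1 * r1 + y2 * u2 * r2) / 2%:R ->
  in_Ok d eps -> in_k d eps' -> eps * eps' = 1 ->
  exists al be, [/\ in_Ok d al, in_k d be, al * be = 1 & al ^+ 2 = eps * c1 * A].
Proof.
move=> d0 hy1 hy2 hu1 hu2 [hc1 hc1'] hc2 c12 [hA hA'] hB hAB hr1 hr2 hS [he he'] he2 hee.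
have S2 : sqrtC eps ^+ 2 = eps by rewrite sqrtCK.
have al2 : (sqrtC eps * r1) ^+ 2 = eps * c1 * A by rewrite exprMn S2 hr1 mulrA.
have ht : (r1 * r2) ^+ 2 = (sqrtC d%:R) ^+ 2.
  rewrite sqrtCK -hAB exprMn hr1 hr2.
  transitivity ((c1 * c2) * (A * B)); first by ring.
  by rewrite c12.
have hkt : in_k d (r1 * r2).
  move/eqP: ht; rewrite eqf_sqr => /orP [/eqP -> | /eqP ->].
    exact: ink_sqrt.
  exact/ink_opp/ink_sqrt.
exists (sqrtC eps * r1), (sqrtC eps * r1 * eps' * c2 * B * (d%:R)^-1); split.
- split.
    have -> : sqrtC eps * r1 = (y1 * u1 * (c1 * A) + y2 * u2 * (r1 * r2)) * 2%:R^-1.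
      by rewrite -hr1 hS; ring.
    exact: (ink_mul d _ _ (ink_add d _ _ (ink_mul d _ _ (ink_mul d _ _ hy1 hu1) (ink_mul d _ _ hc1 hA)) (ink_mul d _ _ (ink_mul d _ _ hy2 hu2) hkt)) (ink_invn d 2)).
  apply: rpredM; apply: Aint_sqr; first by rewrite S2.
  by rewrite hr1 rpredM.
- have hk : in_k d (sqrtC eps * r1).
  have -> : sqrtC eps * r1 = (y1 * u1 * (c1 * A) + y2 * u2 * (r1 * r2)) * 2%:R^-1.
    by rewrite -hr1 hS; ring.
  exact: (ink_mul d _ _ (ink_add d _ _ (ink_mul d _ _ (ink_mul d _ _ hy1 hu1) (ink_mul d _ _ hc1 hA)) (ink_mul d _ _ (ink_mul d _ _ hy2 hu2) hkt)) (ink_invn d 2)).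
  exact: (ink_mul d _ _ (ink_mul d _ _ (ink_mul d _ _ (ink_mul d _ _ hk he2) hc2) hB) (ink_invn d d)).
- transitivity ((sqrtC eps * r1) ^+ 2 * eps' * c2 * B * (d%:R)^-1); first by ring.
  rewrite al2.
  transitivity ((eps * eps') * (c1 * c2) * (A * B) * (d%:R)^-1); first by ring.
  rewrite hee c12 mul1r hAB divff //.
  by rewrite pnatr_eq0 -lt0n.
- exact: al2.
Qed.

Arguments Ok_add {d x y}. Arguments Ok_mul {d x y}. Arguments Ok_opp {d x}.
Arguments alpha1 {d eps eps' y1 y2 u1 u2 r1 r2 c1 c2 A B}.
Arguments triple {d eps eps' c pa pb Ha Hb Hc al be}.

Lemma ink_gauss d y : gauss_int y -> in_k d y.
Proof.
move=> [/intrP [m hm] /intrP [n hn]].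
rewrite (Crect y) hm hn.
exact: (ink_add d _ _ (ink_int d m) (ink_mul d _ _ (ink_i d) (ink_int d n))).
Qed.

Lemma Ok_1pi d : in_Ok d (1 + 'i). Proof. exact: (Ok_add (Ok1 d) (Ok_i d)). Qed.
Lemma Ok_1mi d : in_Ok d (1 - 'i). Proof. exact: (Ok_add (Ok1 d) (Ok_opp (Ok_i d))). Qed.
Lemma pm_i : (1 + 'i) * (1 - 'i) = 2%:R :> algC.
Proof.
have hi : 'i ^+ 2 = -1 :> algC by rewrite sqrCi.
transitivity (1 - 'i ^+ 2 : algC); first by ring.
by rewrite hi opprK.
Qed.

Lemma final d (eps eps' pa pb pc pe y1 y2 r1 r2 : algC) H0 Ha Hb Hc He :
  (0 < d)%N -> in_Ok d eps -> in_Ok d eps' -> eps * eps' = 1 ->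
  in_Ok d pa -> in_Ok d pb -> in_Ok d pc -> in_Ok d pe ->
  2%:R * ((pa * pb) * (pc * pe)) = d%:R ->
  gauss_int y1 -> gauss_int y2 ->
  (r1 ^+ 2 = (1 + 'i) * (pa * pb) /\ r2 ^+ 2 = (1 - 'i) * (pc * pe)) \/
  (r1 ^+ 2 = (1 - 'i) * (pa * pb) /\ r2 ^+ 2 = (1 + 'i) * (pc * pe)) ->
  sqrtC eps = (y1 * (1 + 'i) * r1 + y2 * (1 - 'i) * r2) / 2%:R ->
  ideal_above d (1 + 'i) H0 -> ideal_above d pa Ha -> ideal_above d pb Hb ->
  ideal_above d pc Hc -> ideal_above d pe He ->
  is_principal d (ideal_mul (ideal_mul H0 Ha) Hb) /\
  is_principal d (ideal_mul (ideal_mul H0 Hc) He).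
Proof.
move=> d0 he he' hee hpa hpb hpc hpe hd hy1 hy2 hcase hS h0 ha hb hc hE.
have hAk := Ok_mul hpa hpb; have hBk := Ok_mul hpc hpe.
have ky1 := ink_gauss d y1 hy1; have ky2 := ink_gauss d y2 hy2.
have k1p := (Ok_1pi d).1; have k1m := (Ok_1mi d).1.
have hS' : sqrtC eps = (y2 * (1 - 'i) * r2 + y1 * (1 + 'i) * r1) / 2%:R by rewrite addrC.
have hd' : 2%:R * ((pc * pe) * (pa * pb)) = d%:R by rewrite [_ * (pa * pb)]mulrC.
have mp := pm_i; have pm : (1 - 'i) * (1 + 'i) = 2%:R :> algC by rewrite mulrC.
case: hcase => [[r1e r2e] | [r1e r2e]].
- have [al [be [A1 A2 A3 A4]]] := alpha1 d0 ky1 ky2 k1p k1m (Ok_1pi d) k1m mp hAk hBk.1 hd r1e r2e hS he he'.1 hee.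
  have [al' [be' [B1 B2 B3 B4]]] := alpha1 d0 ky2 ky1 k1m k1p (Ok_1mi d) k1p pm hBk hAk.1 hd' r2e r1e hS' he he'.1 hee.
  split.
    exact: (triple h0 ha hb he he' hee (or_introl erefl) A4 A1 A2 A3).
  exact: (triple h0 hc hE he he' hee (or_intror erefl) B4 B1 B2 B3).
have [al [be [A1 A2 A3 A4]]] := alpha1 d0 ky1 ky2 k1p k1m (Ok_1mi d) k1p pm hAk hBk.1 hd r1e r2e hS he he'.1 hee.
have [al' [be' [B1 B2 B3 B4]]] := alpha1 d0 ky2 ky1 k1m k1p (Ok_1pi d) k1m mp hBk hAk.1 hd' r2e r1e hS' he he'.1 hee.
split.
  exact: (triple h0 ha hb he he' hee (or_intror erefl) A4 A1 A2 A3).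
exact: (triple h0 hc hE he he' hee (or_introl erefl) B4 B1 B2 B3).
Qed.

Arguments Ok_add {d x y}. Arguments Ok_mul {d x y}. Arguments Ok_opp {d x}.
Arguments final {d eps eps' pa pb pc pe y1 y2 r1 r2 H0 Ha Hb Hc He}.

Lemma pi_norm (e f : int) (p : nat) : p%:Z = e ^+ 2 + 4 * f ^+ 2 ->
  (e%:~R + 2%:R * 'i * f%:~R) * (e%:~R - 2%:R * 'i * f%:~R) = p%:R :> algC.
Proof.
move=> h.
have hh := congr1 (fun z : int => (z%:~R : algC)) h; simpl in hh.
rewrite -[p%:R : algC]/((p%:Z)%:~R : algC) hh.
rewrite !expr2 intrD !intrM.
have h4 : (4 : int)%:~R = 4%:R :> algC by [].
rewrite h4.
have hi : 'i ^+ 2 = -1 :> algC by rewrite sqrCi.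
apply/eqP; rewrite -subr_eq0; apply/eqP.
transitivity (- (4%:R * (f%:~R * f%:~R)) * ('i ^+ 2 + 1) : algC); first by ring.
by rewrite hi addNr mulr0.
Qed.

Lemma ratr_norm (a b : rat) (n : nat) :
  ratr (a ^+ 2 - n%:R * b ^+ 2) = ratr a ^+ 2 - n%:R * ratr b ^+ 2 :> algC.
Proof. by rewrite rmorphB !rmorphM rmorph_nat !expr2. Qed.

Lemma Ok_pi d (e f : int) : in_Ok d (e%:~R + 2%:R * 'i * f%:~R).
Proof. exact: (Ok_add (Ok_int d e) (Ok_mul (Ok_mul (Ok_int d 2) (Ok_i d)) (Ok_int d f))). Qed.
Lemma Ok_pi' d (e f : int) : in_Ok d (e%:~R - 2%:R * 'i * f%:~R).
Proof. exact: (Ok_add (Ok_int d e) (Ok_opp (Ok_mul (Ok_mul (Ok_int d 2) (Ok_i d)) (Ok_int d f)))). Qed.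

Theorem lemma42 (p1 p2 : nat) (e f g h : int) (eps : algC)
  (H0 H1 H2 H3 H4 : algC -> Prop) :
  prime p1 -> prime p2 -> (p1 %% 4 = 1)%N -> (p2 %% 4 = 1)%N ->
  p1%:Z = e ^+ 2 + 4 * f ^+ 2 -> p2%:Z = g ^+ 2 + 4 * h ^+ 2 ->
  let d := (2 * p1 * p2)%N in
  let pi1 := e%:~R + 2%:R * 'i * f%:~R : algC in
  let pi2 := e%:~R - 2%:R * 'i * f%:~R : algC in
  let pi3 := g%:~R + 2%:R * 'i * h%:~R : algC in
  let pi4 := g%:~R - 2%:R * 'i * h%:~R : algC in
  fund_unit d eps -> Qsqrt_norm_is d eps (-1) ->
  ideal_above d (1 + 'i) H0 ->
  ideal_above d pi1 H1 -> ideal_above d pi2 H2 ->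
  ideal_above d pi3 H3 -> ideal_above d pi4 H4 ->
  (has_form eps (pi1 * pi3) (pi2 * pi4) ->
     is_principal d (ideal_mul (ideal_mul H0 H1) H3) /\
     is_principal d (ideal_mul (ideal_mul H0 H2) H4)) /\
  (has_form eps (pi1 * pi4) (pi2 * pi3) ->
     is_principal d (ideal_mul (ideal_mul H0 H1) H4) /\
     is_principal d (ideal_mul (ideal_mul H0 H2) H3)).
Proof.
move=> pr1 pr2 _ _ he hg d pi1 pi2 pi3 pi4 [[hQ hA hAi] _ _] [a [b [ea na]]] h0 h1 h2 h3 h4.
have d0 : (0 < d)%N by rewrite /d !muln_gt0 /= !prime_gt0.
have heO : in_Ok d eps by split => //; exact: ink_Q.
pose eps' : algC := ratr b * sqrtC d%:R - ratr a.
have hee : eps * eps' = 1.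
  have hr : ratr (a ^+ 2 - d%:R * b ^+ 2) = ratr a ^+ 2 - d%:R * ratr b ^+ 2 :> algC.
    exact: ratr_norm.
  transitivity (- ratr (a ^+ 2 - d%:R * b ^+ 2) : algC); last first.
    by rewrite -na rmorphN rmorph1 opprK.
  rewrite hr /eps' ea.
  set s := sqrtC _.
  have hs : s ^+ 2 = d%:R by rewrite sqrtCK.
  rewrite -hs; ring.
have he' : in_Ok d eps'.
  split.
    apply: ink_sub; last exact: ink_rat.
    exact: (ink_mul d _ _ (ink_rat d b) (ink_sqrt d)).
  have hne : eps != 0 by apply: contra_eq_neq hee => ->; rewrite mul0r eq_sym oner_neq0.
  suff -> : eps' = eps^-1 by [].
  by rewrite -[eps']mul1r -(mulVf hne) -mulrA hee mulr1.
have k1 := Ok_pi d e f; have k2 := Ok_pi' d e f.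
have k3 := Ok_pi d g h; have k4 := Ok_pi' d g h.
have n1 : pi1 * pi2 = p1%:R := pi_norm e f p1 he.
have n2 : pi3 * pi4 = p2%:R := pi_norm g h p2 hg.
split => -[y1 [y2 [r1 [r2 [hy1 hy2 hc hS]]]]].
- apply: (final d0 heO he' hee k1 k3 k2 k4 _ hy1 hy2 hc hS h0 h1 h3 h2 h4).
  rewrite /d !natrM -n1 -n2 /pi1 /pi2 /pi3 /pi4; ring.
- apply: (final d0 heO he' hee k1 k4 k2 k3 _ hy1 hy2 hc hS h0 h1 h4 h2 h3).
  rewrite /d !natrM -n1 -n2 /pi1 /pi2 /pi3 /pi4; ring.
Qed.
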